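(* Let $S$ be a finite $p$-group and $\mathcal{A}$ a divisible $S$-algebra. Then $\mathcal{A}$ has all twisted units if and only if, for all isomorphisms $\varphi:P\to Q$ and $\psi:Q\to R$ of $\mathfrak{F}_S(\mathcal{A})$, every element of $\mathcal{A}(\psi\varphi)$ is of the form $xy$ with $x\in\mathcal{A}(\psi)$ and $y\in\mathcal{A}(\varphi)$ (i.e. the multiplication pairing $\mathcal{A}(\psi)\times\mathcal{A}(\varphi)\to\mathcal{A}(\psi\varphi)$ is surjective).
   Context: $\mathcal{O}$ is a complete local noetherian domain with maximal ideal $\mathfrak{m}$ and algebraically closed residue field of characteristic $p$. An interior $S$-algebra is an $\mathcal{O}$-free finite-rank $\mathcal{O}$-algebra $\mathcal{A}$ with group homomorphism $S\to\mathcal{A}^\times$; $S\times S$ acts by $(s,t)a=sat^{-1}$; it is bifree if it has an $\mathcal{O}$-basis $Y$ with $sY=Y=Ys$ ($s\in S$) on which left and right actions are free. For $P\le S$ and injective $\varphi:P\to S$, ${}^\varphi\mathcal{A}^P=\{a:\varphi(p)a=ap\ \forall p\}$ is the fixed points of $\Delta(\varphi,P)=\{(\varphi(p),p)\}$, and $\mathcal{A}(\varphi)=\mathcal{A}^{\Delta}/(\mathfrak{m}\mathcal{A}^\Delta+\sum_{V<\Delta}\mathrm{tr}_V^\Delta\mathcal{A}^V)$ with $\Delta=\Delta(\varphi,P)$ and quotient map $\mathrm{br}_\varphi$; $\mathcal{A}(P)=\mathcal{A}(\iota_P)$. Multiplication induces $\mathcal{A}(\psi)\times\mathcal{A}(\varphi)\to\mathcal{A}(\psi\varphi)$,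 $\mathrm{br}_\psi(a)\mathrm{br}_\varphi(c)=\mathrm{br}_{\psi\varphi}(ac)$. $\mathfrak{F}_S(\mathcal{A})$: objects subgroups of $S$, $\mathrm{Hom}(P,Q)=\{\varphi:P\to Q$ injective$:\mathcal{A}(\varphi)\ne0\}$. $\mathcal{A}$ is divisible if it is bifree and $\mathfrak{F}_S(\mathcal{A})$ contains all inclusions, is closed under composition, and every morphism is an inclusion composed with an isomorphism of $\mathfrak{F}_S(\mathcal{A})$. For an isomorphism $\varphi:P\to Q$ of $\mathfrak{F}_S(\mathcal{A})$, a twisted unit of $\varphi$ is $u\in\mathcal{A}(\varphi)$ such that some $u^\dagger\in\mathcal{A}(\varphi^{-1})$ satisfies $u^\dagger u=1_{\mathcal{A}(P)}$; $\mathcal{A}$ has all twisted units if every isomorphism of $\mathfrak{F}_S(\mathcal{A})$ has a twisted unit. *)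

(* Defs.v *)
From HB Require Import structures.
From mathcomp Require Import all_boot all_order all_algebra all_fingroup all_solvable.
Set Implicit Arguments.
Unset Strict Implicit.
Unset Printing Implicit Defensive.
Import GRing.Theory.
Local Open Scope ring_scope.

Section Coefficients.
Variable O : idomainType.

Definition is_ideal (I : {pred O}) : Prop :=
  [/\ 0 \in I, {in I &, forall x y, x + y \in I} &
      forall r x, x \in I -> r * x \in I].

Definition generated_by (s : seq O) (x : O) : Prop :=
  exists c : 'I_(size s) -> O, x = \sum_(i < size s) c i * s`_i.

Definition noetherian_ring : Prop :=
  forall I : {pred O}, is_ideal I ->
    exists s : seq O, forall x, x \in I <-> generated_by s x.

Definition local_with_max_ideal (m : {pred O}) : Prop :=
  [/\ is_ideal m, 1 \notin m & forall x, x \notin m -> x \is a GRing.unit].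

Definition in_ideal_pow (m : {pred O}) (n : nat) (x : O) : Prop :=
  exists s : seq (O * n.-tuple O),
    (forall t, t \in s -> forall i : 'I_n, tnth t.2 i \in m) /\
    x = \sum_(t <- s) t.1 * \prod_(i < n) tnth t.2 i.

Definition madic_complete (m : {pred O}) : Prop :=
  (forall x, (forall n, in_ideal_pow m n x) -> x = 0) /\
  (forall a : nat -> O, (forall n, in_ideal_pow m n (a n.+1 - a n)) ->
     exists l, forall n, in_ideal_pow m n (l - a n)).

Definition residue_alg_closed (m : {pred O}) : Prop :=
  forall f : {poly O}, f \is monic -> (1 < size f)%N ->
    exists a, f.[a] \in m.

Definition residue_char (m : {pred O}) (p : nat) : Prop :=
  prime p /\ (p%:R : O) \in m.

Definition good_coefficients (m : {pred O}) (p : nat) : Prop :=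
  [/\ local_with_max_ideal m, noetherian_ring, madic_complete m,
      residue_alg_closed m & residue_char m p].

End Coefficients.

Section Interior.
Variables (O : idomainType) (A : algType O) (gT : finGroupType).

Definition interior_structure (S : {set gT}) (u : gT -> A) : Prop :=
  u 1%g = 1 /\ {in S &, forall s t, u (s * t)%g = u s * u t}.

Definition is_O_basis (Y : seq A) : Prop :=
  (forall a : A, exists c : 'I_(size Y) -> O,
      a = \sum_(i < size Y) c i *: Y`_i) /\
  (forall c : 'I_(size Y) -> O,
      \sum_(i < size Y) c i *: Y`_i = 0 -> forall i, c i = 0).

Definition bifree (S : {set gT}) (u : gT -> A) : Prop :=
  exists Y : seq A,
    [/\ is_O_basis Y,
        forall s, s \in S -> [seq u s * y | y <- Y] =i Y,
        forall s, s \in S -> [seq y * u s | y <- Y] =i Y,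
        forall s y, s \in S -> y \in Y -> u s * y = y -> s = 1%g &
        forall s y, s \in S -> y \in Y -> y * u s = y -> s = 1%g].

Variable u : gT -> A.

Definition sact (x : gT * gT) (a : A) : A := u x.1 * a * u (x.2)^-1.

Definition fixedpt (D : {set gT * gT}) (a : A) : Prop :=
  forall x, x \in D -> sact x a = a.

Definition rtrace (V D : {set gT * gT}) (a : A) : A :=
  \sum_(C in lcosets V D) sact (repr C) a.

(* a belongs to  m A^D + sum_{V < D} tr_V^D A^V, the kernel of br *)
Definition brker (m : {pred O}) (D : {set gT * gT}) (a : A) : Prop :=
  exists (s : seq (O * A)) (c : {group (gT * gT)} -> A),
    [/\ forall t, t \in s -> t.1 \in m /\ fixedpt D t.2,
        forall V : {group (gT * gT)}, V \proper D -> fixedpt V (c V) &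
        a = \sum_(t <- s) t.1 *: t.2 +
            \sum_(V : {group (gT * gT)} | V \proper D) rtrace V D (c V)].

Definition Delta (phi : gT -> gT) (P : {set gT}) : {set gT * gT} :=
  [set (phi x, x) | x in P].

(* A(phi) <> 0 *)
Definition brauer_nonzero (m : {pred O}) (phi : gT -> gT) (P : {set gT})
  : Prop :=
  exists a, fixedpt (Delta phi P) a /\ ~ brker m (Delta phi P) a.

Definition inj_hom (phi : gT -> gT) (P Q : {set gT}) : Prop :=
  [/\ {in P &, forall x y, phi (x * y)%g = (phi x * phi y)%g},
      {in P &, injective phi} & phi @: P \subset Q].

Variables (m : {pred O}) (S : {set gT}).

Definition FHom (P Q : {group gT}) (phi : gT -> gT) : Prop :=
  [/\ P \subset S, Q \subset S, inj_hom phi P Q & brauer_nonzero m phi P].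

Definition FIso_with (P Q : {group gT}) (phi phi' : gT -> gT) : Prop :=
  [/\ FHom P Q phi, FHom Q P phi',
      {in P, forall x, phi' (phi x) = x} & {in Q, forall y, phi (phi' y) = y}].

Definition FIso (P Q : {group gT}) (phi : gT -> gT) : Prop :=
  exists phi', FIso_with P Q phi phi'.

Definition divisible : Prop :=
  [/\ bifree S u,
      forall P Q : {group gT}, P \subset S -> Q \subset S -> P \subset Q ->
        FHom P Q id,
      forall (P Q R : {group gT}) (phi psi : gT -> gT),
        FHom P Q phi -> FHom Q R psi -> FHom P R (psi \o phi) &
      forall (P Q : {group gT}) (phi : gT -> gT), FHom P Q phi ->
        exists (Q' : {group gT}) (alpha : gT -> gT),
          [/\ FIso P Q' alpha, Q' \subset Q & {in P, phi =1 alpha}]].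

(* u in A(phi) is a twisted unit: some u' in A(phi^-1) has u' u = 1 in A(P) *)
Definition twisted_unit (P Q : {group gT}) (phi phi' : gT -> gT) (a : A)
  : Prop :=
  fixedpt (Delta phi P) a /\
  exists a', fixedpt (Delta phi' Q) a' /\
             brker m (Delta id P) (a' * a - 1).

Definition has_all_twisted_units : Prop :=
  forall (P Q : {group gT}) (phi phi' : gT -> gT),
    FIso_with P Q phi phi' -> exists a, twisted_unit P Q phi phi' a.

Definition pairing_surjective (P Q : {group gT}) (phi psi : gT -> gT) : Prop :=
  forall c, fixedpt (Delta (psi \o phi) P) c ->
    exists x y, [/\ fixedpt (Delta psi Q) x, fixedpt (Delta phi P) y &
                    brker m (Delta (psi \o phi) P) (c - x * y)].

End Interior.

(* Main.v *)
Require Import Defs.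
From mathcomp Require Import all_boot all_order all_algebra all_fingroup all_solvable.
Set Implicit Arguments.
Unset Strict Implicit.
Unset Printing Implicit Defensive.
Import GRing.Theory.

Section Lin.
Variables (O : idomainType) (A : algType O) (gT : finGroupType) (u : gT -> A)
  (m : {pred O}).
Local Open Scope ring_scope.

Lemma sact0 x : sact u x 0 = 0.
Proof. by rewrite /sact mulr0 mul0r. Qed.
Lemma sactD x a b : sact u x (a + b) = sact u x a + sact u x b.
Proof. by rewrite /sact mulrDr mulrDl. Qed.
Lemma sactN x a : sact u x (- a) = - sact u x a.
Proof. by rewrite /sact mulrN mulNr. Qed.

Lemma fixed0 D : fixedpt u D 0.
Proof. by move=> x _; rewrite sact0. Qed.
Lemma fixedD D a b : fixedpt u D a -> fixedpt u D b -> fixedpt u D (a + b).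
Proof. by move=> Ha Hb x xD; rewrite sactD Ha ?Hb. Qed.
Lemma fixedN D a : fixedpt u D a -> fixedpt u D (- a).
Proof. by move=> Ha x xD; rewrite sactN Ha. Qed.

Lemma rtrace0 V D : rtrace u V D 0 = 0.
Proof. by rewrite /rtrace big1 // => C _; rewrite sact0. Qed.
Lemma rtraceD V D a b : rtrace u V D (a + b) = rtrace u V D a + rtrace u V D b.
Proof. by rewrite /rtrace -big_split; apply: eq_bigr => C _; rewrite sactD. Qed.
Lemma rtraceN V D a : rtrace u V D (- a) = - rtrace u V D a.
Proof. by rewrite /rtrace -sumrN; apply: eq_bigr => C _; rewrite sactN. Qed.

Lemma brker0 D : brker u m D 0.
Proof.
exists [::], (fun _ => 0); split => //.
  by move=> V _; apply: fixed0.
by rewrite big_nil add0r big1 // => V _; rewrite rtrace0.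
Qed.

Lemma brkerD D a b : brker u m D a -> brker u m D b -> brker u m D (a + b).
Proof.
move=> [s1 [c1 [H1 K1 ->]]] [s2 [c2 [H2 K2 ->]]].
exists (s1 ++ s2), (fun V => c1 V + c2 V); split.
- by move=> t; rewrite mem_cat => /orP[/H1|/H2].
- by move=> V VD; apply: fixedD; [apply: K1|apply: K2].
rewrite big_cat /=.
under [X in _ = _ + X]eq_bigr => V _ do rewrite rtraceD.
rewrite big_split /=.
rewrite -!addrA; congr (_ + _); rewrite [RHS]addrC -!addrA; congr (_ + _).
by rewrite addrC.
Qed.

Lemma brkerN D a : brker u m D a -> brker u m D (- a).
Proof.
move=> [s [c [H K ->]]].
exists [seq (t.1, - t.2) | t <- s], (fun V => - c V); split.
- move=> t /mapP[t' t's ->] /=; have [] := H _ t's; split => //.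
  exact: fixedN.
- by move=> V VD; apply: fixedN; apply: K.
rewrite big_map opprD -!sumrN; congr (_ + _).
  by apply: eq_bigr => t _ /=; rewrite scalerN.
by apply: eq_bigr => V _; rewrite rtraceN.
Qed.

Lemma brker_sum D (I : Type) (r : seq I) (P : pred I) (F : I -> A) :
  (forall i, P i -> brker u m D (F i)) -> brker u m D (\sum_(i <- r | P i) F i).
Proof.
move=> H; apply: (big_ind (brker u m D)) => //.
  exact: brker0.
exact: brkerD.
Qed.

Lemma brker_m D k a : k \in m -> fixedpt u D a -> brker u m D (k *: a).
Proof.
move=> km Ha; exists [:: (k, a)], (fun _ => 0); split.
- by move=> t; rewrite inE => /eqP ->.
- by move=> V _; apply: fixed0.
by rewrite big_seq1 big1 ?addr0 // => V _; rewrite rtrace0.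
Qed.

Lemma brker_tr (D : {set gT * gT}) (V : {group (gT * gT)}) a :
  V \proper D -> fixedpt u V a -> brker u m D (rtrace u V D a).
Proof.
move=> VD Ha; exists [::], (fun W => if W == V then a else 0); split => //.
- by move=> W _; case: eqP => [->|_] //; apply: fixed0.
rewrite big_nil add0r (bigD1 V) //= eqxx big1 ?addr0 // => W /andP[_ /negbTE ->].
by rewrite rtrace0.
Qed.

End Lin.


Section Grp.
Variables (O : idomainType) (A : algType O) (gT : finGroupType) (u : gT -> A)
  (m : {pred O}) (S : {group gT}).
Hypothesis Hu : interior_structure S u.
Local Open Scope ring_scope.

Definition inSS (z : gT * gT) := (z.1 \in S) && (z.2 \in S).

Lemma uV1 y : y \in S -> u y^-1 * u y = 1.
Proof. by move=> yS; case: Hu => H1 HM; rewrite -HM ?groupV // mulVg H1. Qed.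
Lemma u1V y : y \in S -> u y * u y^-1 = 1.
Proof. by move=> yS; case: Hu => H1 HM; rewrite -HM ?groupV // mulgV H1. Qed.

Lemma sactM p q a : inSS p -> inSS q ->
  sact u (p * q)%g a = sact u p (sact u q a).
Proof.
case: p q => [p1 p2] [q1 q2] /andP[/= p1S p2S] /andP[/= q1S q2S].
case: Hu => _ HM; rewrite /sact /= HM // invMg HM ?groupV //.
by rewrite !mulrA.
Qed.

Lemma sact_coset (V : {group (gT * gT)}) x y z a :
  fixedpt u V a -> {subset V <= inSS} -> y \in (x *: V)%g -> z \in (x *: V)%g ->
  inSS z -> sact u y a = sact u z a.
Proof.
move=> Ha VS; rewrite !mem_lcoset => yV zV zS.
have zyV : (z^-1 * y)%g \in V.
  by have := groupM (groupVr zV) yV; rewrite invMg invgK !mulgA mulgK.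
have -> : y = (z * (z^-1 * y))%g by rewrite mulKVg.
rewrite sactM //; last exact: VS.
by rewrite Ha.
Qed.

Lemma memDelta f (P : {set gT}) z :
  (z \in Delta f P) = (z.2 \in P) && (z.1 == f z.2).
Proof.
apply/imsetP/andP => [[x xP ->]|[zP /eqP ze]] //=.
by exists z.2 => //; case: z ze {zP} => /= ? ? ->.
Qed.

End Grp.


Section Transfer.
Variables (O : idomainType) (A : algType O) (gT : finGroupType) (u : gT -> A)
  (m : {pred O}) (S : {group gT}).
Hypothesis Hu : interior_structure S u.
Variables (P : {group gT}) (g : gT -> gT).
Hypothesis PS : P \subset S.
Hypothesis gS : {in P, forall x, g x \in S}.
Hypothesis gM : {in P &, forall x y, g (x * y)%g = (g x * g y)%g}.
Local Open Scope ring_scope.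

Let D1 := Delta id P.
Let D2 := Delta g P.
Definition theta (z : gT * gT) := (g z.2, z.2).
Definition Vp (V : {set gT * gT}) := [set z in D2 | (z.2, z.2) \in V].

Lemma g1 : g 1%g = 1%g.
Proof. by apply: (mulgI (g 1%g)); rewrite -gM ?group1 // !mulg1. Qed.

Lemma Vp_group (V : {group (gT * gT)}) : group_set (Vp V).
Proof.
apply/group_setP; split.
  by rewrite inE memDelta /= group1 g1 eqxx group1.
move=> [x1 x2] [y1 y2]; rewrite !inE !memDelta /= => /andP[/andP[x2P /eqP->] xV]
  /andP[/andP[y2P /eqP->] yV].
rewrite groupM // gM // eqxx /=.
by have := groupM xV yV.
Qed.

Canonical Vp_groupG (V : {group (gT * gT)}) := Group (Vp_group V).

Lemma D2SS : {subset D2 <= inSS S}.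
Proof.
move=> z; rewrite memDelta => /andP[zP /eqP ze]; apply/andP; split.
  by rewrite ze gS.
exact: (subsetP PS).
Qed.

Lemma mulc_sact c w y : y \in P -> fixedpt u D2 c ->
  c * sact u (y, y) w = sact u (g y, y) (c * w).
Proof.
move=> yP Hc.
have yS : y \in S by apply: (subsetP PS).
have := Hc (g y, y); rewrite memDelta /= yP eqxx => /(_ isT) Hc'.
rewrite -{1}Hc' /sact /= !mulrA.
by rewrite -[u (g y) * c * u y^-1 * u y]mulrA (uV1 Hu) // mulr1.
Qed.

Lemma fix_transfer (X V : {set gT * gT}) c w :
  fixedpt u D2 c -> fixedpt u V w -> {subset X <= D2} ->
  (forall z, z \in X -> (z.2, z.2) \in V) -> fixedpt u X (c * w).
Proof.
move=> Hc Hw XD XV z zX.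
have := XD _ zX; rewrite memDelta => /andP[zP /eqP ze].
have -> : z = (g z.2, z.2) by case: z ze {zX zP} => /= ? ? ->.
by rewrite -mulc_sact // Hw // XV.
Qed.

Lemma D1M x y : x \in D1 -> y \in D1 -> (x * y)%g \in D1.
Proof.
case: x y => [x1 x2] [y1 y2]; rewrite !memDelta /= => /andP[xP /eqP ->]
  /andP[yP /eqP ->].
by rewrite groupM ?eqxx.
Qed.

Lemma coset_image (V : {group (gT * gT)}) x : V \subset D1 -> x \in D1 ->
  [set theta z | z in (x *: V)%g] = (theta x *: Vp V)%g.
Proof.
move=> VD xD; have := xD; rewrite memDelta => /andP[xP /eqP /= xe].
have -> : x = (x.2, x.2) by case: x xe {xD xP} => /= ? ? ->.
apply/setP => z; apply/imsetP/idP.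
- move=> [y /lcosetP [v vV ->] ->].
  have := subsetP VD _ vV; rewrite memDelta => /andP[vP /eqP ve].
  apply/lcosetP; exists (theta v).
    by rewrite inE memDelta /= vP eqxx /=; 
       have -> : (v.2, v.2) = v by case: v ve {vV vP} => /= ? ? ->.
  by rewrite /theta /= gM.
- move=> /lcosetP [v]; rewrite inE memDelta => /andP[/andP[vP /eqP ve] vV] ->.
  exists ((x.2, x.2) * (v.2, v.2))%g.
    by apply/lcosetP; exists (v.2, v.2).
  by rewrite /theta /= gM //; case: v ve {vV vP} => /= ? ? ->.
Qed.


Lemma theta_D2 z : z \in D1 -> theta z \in D2.
Proof. by rewrite !memDelta /= eqxx andbT => /andP[]. Qed.

Lemma D1e z : z \in D1 -> z = (z.2, z.2).
Proof. by rewrite memDelta => /andP[_ /eqP]; case: z => /= ? ? ->. Qed.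

Lemma coset_sub (V : {group (gT * gT)}) x : V \subset D1 -> x \in D1 ->
  (x *: V)%g \subset D1.
Proof.
move=> VD xD; apply/subsetP => y /lcosetP[v vV ->].
by apply: D1M => //; apply: (subsetP VD).
Qed.

Lemma D2_theta : D2 = [set theta z | z in D1].
Proof.
apply/setP => z; apply/idP/imsetP.
  rewrite memDelta => /andP[zP /eqP ze]; exists (z.2, z.2).
    by rewrite memDelta /= zP eqxx.
  by rewrite /theta /=; case: z ze {zP} => /= ? ? ->.
by move=> [y yD ->]; apply: theta_D2.
Qed.

Lemma trace_transfer (V : {group (gT * gT)}) c w :
  V \subset D1 -> fixedpt u D2 c -> fixedpt u V w ->
  c * rtrace u V D1 w = rtrace u (Vp V) D2 (c * w).
Proof.
move=> VD Hc Hw.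
rewrite /rtrace mulr_sumr.
have L2 : lcosets (Vp V) D2 =
    [set [set theta z | z in C] | C : {set gT * gT} in lcosets V D1].
  rewrite /lcosets D2_theta -imset_comp -[RHS]imset_comp.
  by apply: eq_in_imset => x xD /=; rewrite !lcosetE (coset_image VD xD).
have K : forall C : {set gT * gT}, C \subset D1 ->
    [set (z.2, z.2) | z in [set theta z | z in C]] = C.
  move=> C CD; rewrite -imset_comp -[RHS]imset_id.
  by apply: eq_in_imset => z zC /=; rewrite -D1e // (subsetP CD).
rewrite L2 (big_imset _ (h := fun C : {set gT * gT} => [set theta z | z in C]) (A := lcosets V D1)) /=; last first.
  move=> C1 C2 /imsetP[x1 x1D ->] /imsetP[x2 x2D ->] /= E.
  rewrite !lcosetE in E *.
  by rewrite -(K _ (coset_sub VD x1D)) E K // coset_sub.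
apply: eq_bigr => C /imsetP[x xD ->]; rewrite lcosetE.
rewrite coset_image //.
set y := repr (x *: V)%g.
have yC : y \in (x *: V)%g := @mem_repr _ _ x (lcoset_refl V x).
have yD : y \in D1 := subsetP (coset_sub VD xD) _ yC.
have yP : y.2 \in P by move: yD; rewrite memDelta => /andP[].
rewrite (D1e yD) mulc_sact //.
have subX : {subset (theta x *: Vp V)%g <= D2}.
  move=> z; rewrite -coset_image // => /imsetP[z' z'C ->].
  by apply: theta_D2; apply: (subsetP (coset_sub VD xD)).
apply: (sact_coset Hu (V := Vp_groupG V) (x := theta x)).
- apply: (fix_transfer (V := V)) => //.
    by move=> z; rewrite inE => /andP[].
  by move=> z; rewrite inE => /andP[].
- by move=> z; rewrite inE => /andP[zD _]; apply: D2SS.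
- by rewrite -coset_image //; apply: (imset_f theta yC).
- exact: (@mem_repr _ _ (theta x) (lcoset_refl (Vp_groupG V) (theta x))).
- apply: D2SS; apply: subX.
  exact: (@mem_repr _ _ (theta x) (lcoset_refl (Vp_groupG V) (theta x))).
Qed.

Lemma brker_mul c z : fixedpt u D2 c -> brker u m D1 z ->
  brker u m D2 (c * z).
Proof.
move=> Hc [s [cV [Hs HV ->]]].
rewrite mulrDr !mulr_sumr; apply: brkerD.
  rewrite big_seq; apply: brker_sum => t ts.
  have [tm tf] := Hs t ts.
  rewrite -scalerAr; apply: brker_m => //.
  apply: (fix_transfer (V := D1)) => // w wD.
  by move: wD; rewrite !memDelta /= eqxx andbT => /andP[].
apply: brker_sum => V VD.
have VD1 : V \subset D1 by case/properP: VD.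
rewrite trace_transfer //; last exact: HV.
apply: brker_tr.
  apply/properP; split.
    by apply/subsetP => w; rewrite inE => /andP[].
  case/properP: VD => _ [v vD vV].
  exists (theta v); first exact: theta_D2.
  by rewrite inE /= -(D1e vD) (negbTE vV) andbF.
apply: (fix_transfer (V := V)) => //; first exact: HV.
  by move=> w; rewrite inE => /andP[].
by move=> w; rewrite inE => /andP[].
Qed.

End Transfer.


Theorem proposition5p2 (O : idomainType) (m : {pred O}) (p : nat)
  (A : algType O) (gT : finGroupType) (S : {group gT}) (u : gT -> A) :
  good_coefficients m p ->
  (p.-group S)%g ->
  interior_structure S u ->
  divisible u m S ->
  has_all_twisted_units u m S <->
  (forall (P Q R : {group gT}) (phi psi : gT -> gT),
     FIso u m S P Q phi -> FIso u m S Q R psi ->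
     pairing_surjective u m P Q phi psi).
Proof.
move=> _ _ Hu _; split.
- move=> HT P Q R phi psi [phi' Hphi] [psi' Hpsi] c Hc.
  have [a [Ha [a' [Ha' Hk]]]] := HT _ _ _ _ Hphi.
  have [[PS QS [phiM _ phiPQ] _] [_ _ [_ _ phi'QP] _] inv1 inv2] := Hphi.
  have [[_ RS' [psiM _ psiQR] _] _ _ _] := Hpsi.
  exists (c * a')%R, a; split => //.
  + move=> z; rewrite memDelta => /andP[yQ /eqP ze].
    have -> : z = (psi z.2, z.2) by case: z ze {yQ} => /= ? ? ->.
    set y := z.2.
    have pP : phi' y \in P by apply: (subsetP phi'QP); apply: imset_f.
    have pS : phi' y \in S by apply: (subsetP PS).
    have e : phi (phi' y) = y by rewrite inv2.
    have H1 := Hc (psi y, phi' y).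
    rewrite memDelta /= pP e eqxx /= in H1; have {}H1 := H1 isT.
    have H2 := Ha' (phi' y, y).
    rewrite memDelta /= yQ eqxx /= in H2; have {}H2 := H2 isT.
    rewrite /sact /= in H1 H2 *.
    transitivity (u (psi y) * c * u (phi' y)^-1%g * (u (phi' y) * a' * u y^-1%g))%R;
      last by rewrite H1 H2.
    rewrite !mulrA; congr (_ * _ * _)%R.
    by rewrite -mulrA (uV1 Hu) // mulr1.
  + rewrite -mulrA -{1}(mulr1 c) -mulrBr -opprB.
    apply: (brker_mul Hu (P := P) (g := psi \o phi)) => //.
    * move=> x xP /=; apply: (subsetP RS'); apply: (subsetP psiQR).
      apply: imset_f; apply: (subsetP phiPQ); exact: imset_f.
    * move=> x y xP yP /=.
      have fx : phi x \in Q by apply: (subsetP phiPQ); exact: imset_f.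
      have fy : phi y \in Q by apply: (subsetP phiPQ); exact: imset_f.
      by rewrite phiM // psiM.
    * exact: brkerN.
- move=> HP P Q phi phi' Hw.
  have Hw' : FIso_with u m S Q P phi' phi by case: Hw => *; split.
  have [[PS _ _ _] _ inv1 _] := Hw.
  have H1 : fixedpt u (Delta (phi' \o phi) P) 1%R.
    move=> z; rewrite memDelta => /andP[zP /eqP ze].
    have zS : z.2 \in S by apply: (subsetP PS).
    by rewrite /sact ze /= inv1 // mulr1 (u1V Hu).
  have [x [y [Hx Hy Hk]]] :=
    HP P Q P phi phi' (ex_intro _ phi' Hw) (ex_intro _ phi Hw') 1%R H1.
  exists y; split => //; exists x; split => //.
  have -> : Delta id P = Delta (phi' \o phi) P.
    by apply: eq_in_imset => z zP /=; rewrite inv1.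
  by rewrite -opprB; apply: brkerN.
Qed.
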